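(* Let $n>2$, $V=\mathbb{F}_2^n$, and let $M$ be any maximal subgroup of the translation group $T$. Then $C_{\mathrm{Sym}(V)}(M)<\mathrm{AGL}(V)$, and $|C_{\mathrm{Sym}(V)}(M)|=2^{2n-1}$.
   Context: $T=\{\sigma_v: v\in V\}\le\mathrm{Sym}(V)$ is the group of translations $\sigma_v:x\mapsto x+v$. $\mathrm{AGL}(V)=T\rtimes\mathrm{GL}(V)$ is the affine group, the group of maps $x\mapsto xL+v$ with $L\in\mathrm{GL}(V)$, $v\in V$; it equals the normaliser of $T$ in $\mathrm{Sym}(V)$. *)

(* Defs.v *)
From HB Require Import structures.
From mathcomp Require Import all_boot all_order all_algebra all_fingroup all_solvable all_field.
Set Implicit Arguments. Unset Strict Implicit. Unset Printing Implicit Defensive.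
Import GRing.Theory.
Local Open Scope ring_scope.

(* V = F_2^n, modelled as row vectors of length n over 'F_2. Sym(V) = {perm V}. *)
Notation Vsp n := 'rV['F_2]_n.

Lemma transl_inj n (v : Vsp n) : injective (fun x : Vsp n => x + v).
Proof. exact: addIr. Qed.

Definition transl n (v : Vsp n) : {perm Vsp n} := perm (@transl_inj n v).

Definition Transl n : {set {perm Vsp n}} := [set transl v | v : Vsp n].

Definition AGL n : {set {perm Vsp n}} :=
  [set g : {perm Vsp n} | [exists L : 'M['F_2]_n, [exists v : Vsp n,
      (L \in unitmx) && [forall x : Vsp n, g x == x *m L + v]]]].

(* Main.v *)
Require Import Defs.
From mathcomp Require Import all_boot all_order all_algebra all_fingroup all_solvable all_field.
From mathcomp Require Import zify.
Set Implicit Arguments. Unset Strict Implicit. Unset Printing Implicit Defensive.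
Import GRing.Theory.
Local Open Scope ring_scope.

Lemma translE n (v x : Vsp n) : transl v x = x + v.
Proof. by rewrite /transl permE. Qed.

Lemma transl_add n (x y : Vsp n) : transl (x + y) = (transl x * transl y)%g.
Proof. by apply/permP=> z; rewrite permM !translE addrA. Qed.

Lemma transl0 n : transl (0 : Vsp n) = 1%g.
Proof. by apply/permP=> z; rewrite translE perm1 addr0. Qed.

Lemma transl_inj' n : injective (@transl n).
Proof. by move=> x y /(congr1 (fun p : {perm _} => p 0)); rewrite !translE !add0r. Qed.

Lemma char2 n (x : Vsp n) : x + x = 0.
Proof.
apply/matrixP=> i j; rewrite !mxE.
by case: (x i j) => [[|[|k]] Hk] //; apply/val_inj.
Qed.

Lemma translV n (x : Vsp n) : ((transl x)^-1)%g = transl x.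
Proof. by apply/eqP; rewrite eq_invg_mul -transl_add char2 transl0. Qed.

Lemma Transl_group_set n : group_set (Transl n).
Proof.
apply/group_setP; split; first by apply/imsetP; exists 0 => //; rewrite transl0.
move=> _ _ /imsetP[x _ ->] /imsetP[y _ ->]; apply/imsetP; exists (x + y) => //.
by rewrite transl_add.
Qed.

Canonical TranslG n := Group (Transl_group_set n).

Lemma card_Vsp n : #|{: Vsp n}| = (2 ^ n)%N.
Proof. by rewrite card_mx card_Fp // mul1n. Qed.

Lemma card_Transl n : #|Transl n| = (2 ^ n)%N.
Proof. by rewrite card_imset ?card_Vsp //; apply: transl_inj'. Qed.

Lemma Transl_pgroup n : (2.-group (TranslG n))%g.
Proof. by rewrite /pgroup /= card_Transl pnatX pnat_id. Qed.


Section S.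
Context (n : nat) (M : {group {perm Vsp n}}) (hM : maximal M (Transl n)).

Lemma Mproper : (M \proper TranslG n)%g.
Proof. exact: maxgroupp hM. Qed.

Lemma Msub : (M \subset TranslG n)%g.
Proof. exact: proper_sub Mproper. Qed.

Lemma idx2 : #|TranslG n : M|%g = 2%N.
Proof. exact: p_maximal_index (Transl_pgroup n) hM. Qed.

Lemma Pin x y : transl x \in M -> transl y \in M -> transl (x + y) \in M.
Proof. by move=> Hx Hy; rewrite transl_add groupM. Qed.

Lemma Pout x y : transl x \notin M -> transl y \notin M -> transl (x + y) \in M.
Proof.
move=> Hx Hy.
have Tx : transl x \in TranslG n by apply/imsetP; exists x.
have Ty : transl y \in TranslG n by apply/imsetP; exists y.
have e1 := rcoset_index2 Msub idx2 (x := transl x).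
have e2 := rcoset_index2 Msub idx2 (x := transl y).
rewrite inE Hx Tx in e1; rewrite inE Hy Ty in e2.
have : transl x \in (M :* transl y)%g by rewrite e2 // !inE Hx Tx.
by rewrite mem_rcoset translV -transl_add.
Qed.

Lemma Pmix x y : transl x \in M -> transl y \notin M -> transl (x + y) \notin M.
Proof.
move=> Hx Hy; apply/negP=> H; move: (Pin Hx H); rewrite addrA char2 add0r.
by rewrite (negbTE Hy).
Qed.

Lemma Pout_ex : exists u, transl u \notin M.
Proof.
have [_ [t Tt tM]] := properP Mproper.
by case/imsetP: Tt tM => u _ -> H; exists u.
Qed.

Lemma P0 : transl 0 \in M.
Proof. by rewrite transl0 group1. Qed.

Lemma card_M : #|M| = (2 ^ n.-1)%N.
Proof.
have := Lagrange Msub; rewrite idx2 /= card_Transl.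
move: #|M| => m; case: n => [|k] /= H.
  by move: H; rewrite expn0 => /eqP; rewrite muln_eq1 andbF.
by apply/eqP; rewrite -(eqn_pmul2r (isT : (0 < 2)%N)) H expnSr.
Qed.

Lemma card_PM : #|[set x : Vsp n | transl x \in M]| = #|M|.
Proof.
rewrite -(card_imset _ (@transl_inj' n)); apply: eq_card => t. apply/imsetP/idP => [[x] | tM]; first by rewrite inE => H ->.
have := subsetP Msub t tM; case/imsetP=> x _ e; exists x => //; rewrite inE -e //.
Qed.
End S.


Section S.
Context (n : nat) (M : {group {perm Vsp n}}) (hM : maximal M (Transl n)).

Lemma C_char (g : {perm Vsp n}) :
  reflect (forall m x, transl m \in M -> g (x + m) = g x + m) (g \in 'C(M))%g.
Proof.
apply: (iffP centP) => [H m x Hm | H t tM].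
  have := congr1 (fun p : {perm _} => p x) (H _ Hm).
  by rewrite !permM !translE => ->.
have := subsetP (Msub hM) t tM; case/imsetP=> m _ e; rewrite e in tM *.
by apply/permP=> x; rewrite !permM !translE H.
Qed.

Lemma C_form u (hu : transl u \notin M) g : (g \in 'C(M))%g ->
  forall x, g x = if transl x \in M then x + g 0 else x + u + g u.
Proof.
move/C_char=> H x; case: ifP => Px.
  by rewrite -{1}(add0r x) H // addrC.
have Pux := Pout hM hu (negbT Px).
have e : x = u + (u + x) by rewrite addrA char2 add0r.
by rewrite {1}e H // addrC (addrC u).
Qed.

End S.


Lemma addKc n (x y : Vsp n) : x + (x + y) = y.
Proof. by rewrite addrA char2 add0r. Qed.

Definition hfun n (M : {group {perm Vsp n}}) (u a b x : Vsp n) :=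
  if transl x \in M then x + a else x + u + b.

Section S.
Context (n : nat) (M : {group {perm Vsp n}}) (hM : maximal M (Transl n)).

Lemma mix_contra u a b x y : transl u \notin M -> transl (a + b) \notin M ->
  transl x \in M -> transl y \notin M -> x + a <> y + u + b.
Proof.
move=> hu hab Px Py e.
have ea : a = x + (y + u + b) by rewrite -e addKc.
have : transl (x + (y + u)) \in M by apply: Pin => //; apply: Pout.
have eab : a + b = x + (y + u) by rewrite ea -addrA -(addrA (y + u) b b) char2 addr0.
by rewrite -eab (negbTE hab).
Qed.

Lemma hfun_inj u a b : transl u \notin M -> transl (a + b) \notin M ->
  injective (hfun M u a b).
Proof.
move=> hu hab x y; rewrite /hfun.
case: ifP => Px; case: ifP => Py.
- exact: addIr.
- by move=> e; case: (mix_contra hu hab Px (negbT Py) e).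
- by move=> e; case: (mix_contra hu hab Py (negbT Px) (esym e)).
- by move/addIr/addIr.
Qed.

End S.


Lemma arith k : (2 ^ k.+1 * (2 ^ k.+1 - 2 ^ k.+1.-1) = 2 ^ (2 * k.+1 - 1))%N.
Proof.
rewrite /= [X in (X - _)%N]expnS -[X in (_ - X)%N]mul1n -mulnBl mul1n -expnD; congr (2 ^ _)%N.
by rewrite mulnS addSn subn1 /= addnn -mul2n.
Qed.

Section S.
Context (n : nat) (M : {group {perm Vsp n}}) (hM : maximal M (Transl n)).

Lemma hperm_C u a b (hu : transl u \notin M) (hab : transl (a + b) \notin M) :
  (perm (hfun_inj hM hu hab) \in 'C(M))%g.
Proof.
apply/(C_char hM) => m x Pm; rewrite !permE /hfun.
case Px: (transl x \in M).
  by rewrite (Pin Px Pm) addrAC.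
have := Pmix Pm (negbT Px); rewrite addrC => /negbTE ->.
rewrite -!addrA; congr (_ + _); rewrite addrC -addrA; congr (_ + _); exact: addrC.
Qed.

Lemma card_C (n0 : (0 < n)%N) : #|('C(M))%g| = (2 ^ (2 * n - 1))%N.
Proof.
have [u hu] := Pout_ex hM.
pose F (g : {perm Vsp n}) := (g 0, g u).
pose S := [set p : Vsp n * Vsp n | transl (p.1 + p.2) \notin M].
have inj : {in 'C(M)%g &, injective F}.
  move=> g1 g2 C1 C2 [e0 eu]; apply/permP=> x.
  by rewrite (C_form hM hu C1) (C_form hM hu C2) e0 eu.
have img : F @: 'C(M)%g = S.
  apply/setP=> [[a b]]; rewrite inE /=; apply/imsetP/idP.
    case=> g Cg [-> ->]; apply/negP=> Pm.
    have := (C_char hM g) Cg _ 0 Pm; rewrite add0r addKc => /perm_inj e.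
    by rewrite -e Pm in hu.
  move=> hab; exists (perm (hfun_inj hM hu hab)); first exact: hperm_C.
  rewrite /F !permE /hfun P0 add0r; case: ifP => [Pu|_]; first by rewrite Pu in hu.
  by rewrite char2 add0r.
rewrite -(card_in_imset inj) img.
pose Q := [set c : Vsp n | transl c \notin M].
pose k (p : Vsp n * Vsp n) := (p.1, p.1 + p.2).
have kinj : injective k by move=> [x1 x2] [y1 y2] [e1 e2]; subst; rewrite (addrI _ e2).
have -> : S = k @: setX setT Q.
  apply/setP=> [[a b]]; rewrite inE /=; apply/idP/imsetP.
    move=> hab; exists (a, a + b); first by rewrite !inE.
    by rewrite /k /= addKc.
  by case=> [[x c]]; rewrite !inE /= => Qc [-> ->]; rewrite addKc.
rewrite card_imset // cardsX cardsT card_Vsp.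
have eQ : Q = ~: [set c : Vsp n | transl c \in M] by apply/setP=> c; rewrite !inE.
have := cardsC [set c : Vsp n | transl c \in M].
rewrite -eQ (card_PM hM) (card_M hM) card_Vsp => eq.
have -> : #|Q| = (2 ^ n - 2 ^ n.-1)%N by rewrite -eq addKn.
by case: (n) n0 => // k' _; rewrite arith.
Qed.

End S.


Lemma F2_cases (s : 'F_2) : s = 0 \/ s = 1.
Proof. by case: s => [[|[|k]] Hk] //; [left|right]; apply: val_inj. Qed.

Lemma F2_11 : (1 + 1 : 'F_2) = 0.
Proof. by apply: val_inj. Qed.

Lemma charm2 m k (x : 'M['F_2]_(m, k)) : x + x = 0.
Proof.
apply/matrixP=> i j; rewrite !mxE.
by case: (F2_cases (x i j)) => ->; rewrite ?addr0 ?F2_11.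
Qed.

Lemma lin_mat n (phi : Vsp n -> 'F_2) (c : Vsp n)
  (phiD : forall x y, phi (x + y) = phi x + phi y) (phic : phi c = 0) :
  exists2 L : 'M['F_2]_n, L \in unitmx & forall x, x *m L = x + phi x *: c.
Proof.
have phi0 : phi 0 = 0 by apply: (@addrI _ (phi 0)); rewrite -phiD !addr0.
have phiZ : forall s v, phi (s *: v) = s * phi v.
  by move=> s v; case: (F2_cases s) => ->; rewrite ?scale0r ?mul0r ?scale1r ?mul1r.
pose P : 'M['F_2]_n := \matrix_(i, j) (phi (delta_mx 0 i) * c 0 j).
pose L : 'M['F_2]_n := 1%:M + P.
have HL : forall x, x *m L = x + phi x *: c.
  move=> x; rewrite mulmxDr mulmx1; congr (_ + _).
  apply/matrixP=> i j; rewrite !mxE ord1.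
  rewrite {2}(row_sum_delta x) (big_morph phi phiD phi0) mulr_suml.
  by apply: eq_bigr=> k _; rewrite mxE phiZ mulrA.
exists L => //.
have LL : L *m L = 1%:M.
  apply/row_matrixP=> i; rewrite row_mul.
  have -> : row i L = row i 1%:M *m L by rewrite -row_mul mul1mx.
  rewrite !HL phiD phiZ phic mulr0 addr0 -addrA -scalerDl.
  by case: (F2_cases (phi (row i 1%:M))) => ->; rewrite ?addr0 ?F2_11 scale0r addr0.
by case: (mulmx1_unit LL).
Qed.


Section S.
Context (n : nat) (M : {group {perm Vsp n}}) (hM : maximal M (Transl n)).

Lemma C_pair_out u g : transl u \notin M -> (g \in 'C(M))%g -> transl (g 0 + g u) \notin M.
Proof.
move=> hu Cg; apply/negP=> Pm.
have := (C_char hM g) Cg _ 0 Pm; rewrite add0r addKc => /perm_inj e.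
by rewrite -e Pm in hu.
Qed.

Lemma C_sub_AGL : ('C(M) \subset AGL n)%g.
Proof.
apply/subsetP=> g Cg.
have [u hu] := Pout_ex hM.
pose phi (x : Vsp n) : 'F_2 := (transl x \notin M)%:R.
have phiD : forall x y, phi (x + y) = phi x + phi y.
  move=> x y; rewrite /phi.
  case Px: (transl x \in M); case Py: (transl y \in M) => /=.
  - by rewrite (Pin Px Py) addr0.
  - by rewrite (negbTE (Pmix Px (negbT Py))) add0r.
  - by rewrite addrC (negbTE (Pmix Py (negbT Px))) addr0.
  - by rewrite (Pout hM (negbT Px) (negbT Py)) F2_11.
pose c := g 0 + u + g u.
have phic : phi c = 0.
  rewrite /phi /c addrAC (Pout hM (C_pair_out hu Cg) hu) //.
have [L uL HL] := lin_mat phiD phic.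
rewrite inE; apply/existsP; exists L; apply/existsP; exists (g 0).
rewrite uL /=; apply/forallP=> x; apply/eqP.
rewrite (C_form hM hu Cg x) HL /phi /c.
case Px: (transl x \in M) => /=; first by rewrite scale0r addr0.
rewrite scale1r -!addrA; congr (_ + _).
by rewrite [RHS]addrC -!addrA char2 addr0.
Qed.

End S.


Section S.
Context (n : nat) (M : {group {perm Vsp n}}) (hM : maximal M (Transl n)).

Lemma C_proper (hn : (2 < n)%N) : ('C(M) \proper AGL n)%g.
Proof.
rewrite properE C_sub_AGL //=.
have [w Pw wn0] : exists2 w : Vsp n, transl w \in M & w != 0.
  have : ~~ ([set x : Vsp n | transl x \in M] \subset [set 0]).
    apply/negP=> Hs; have := subset_leq_card Hs; rewrite cards1 (card_PM hM) (card_M hM).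
    case: (n) hn => [|[|[|k]]] //= _ h; have := expn_gt0 2 k; move: h; rewrite !expnS; lia.
  by case/subsetPn=> w; rewrite !inE => Pw wn0; exists w.
have [i wi] : exists i, w 0 i != 0.
  have : [exists i, w 0 i != 0].
    apply: contraR wn0 => /existsPn H; apply/eqP/matrixP=> a b.
    by rewrite ord1 mxE; apply/eqP; move/negPn: (H b).
  by case/existsP=> i; exists i.
have wi1 : w 0 i = 1 by case: (F2_cases (w 0 i)) wi => ->; rewrite ?eqxx.
have [j ji] : exists j : 'I_n, j != i.
  have lt0 : (0 < n)%N by apply: leq_trans hn.
  have lt1 : (1 < n)%N by apply: leq_trans hn.
  case: (eqVneq i (Ordinal lt0)) => [ei|ne]; last by exists (Ordinal lt0); rewrite eq_sym.
  by exists (Ordinal lt1); rewrite ei.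
pose phi (x : Vsp n) := x 0 i.
have phiD : forall x y, phi (x + y) = phi x + phi y by move=> x y; rewrite /phi mxE.
have phic : phi (delta_mx 0 j) = 0 by rewrite /phi mxE eq_refl /= eq_sym (negbTE ji).
have [L uL HL] := lin_mat phiD phic.
pose g : {perm Vsp n} := perm (@can_inj _ _ (fun x : Vsp n => x *m L) _ (mulmxK uL)).
apply/subsetPn; exists g.
  rewrite inE; apply/existsP; exists L; apply/existsP; exists 0.
  by rewrite uL /=; apply/forallP=> x; rewrite permE addr0.
apply/negP=> /(C_char hM) H.
have := H w 0 Pw; rewrite !permE add0r mul0mx add0r HL /phi wi1 scale1r.
move/(congr1 (fun v : Vsp n => v 0 j)); rewrite !mxE /= eqxx => /eqP; rewrite addrC -subr_eq0 addrK.
by rewrite oner_eq0.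
Qed.
End S.


Theorem mainTheorem5 (n : nat) (hn : (2 < n)%N) (M : {group {perm 'rV['F_2]_n}})
  (hM : maximal M (Transl n)) :
  ('C(M) \proper AGL n)%g /\ #|'C(M)%g| = (2 ^ (2 * n - 1))%N.
Proof.
split; first exact: C_proper.
by apply: card_C => //; apply: leq_trans hn.
Qed.
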